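(* Let $q\in(0,\tfrac12)$ and $T,S\in\mathbb{R}$, and set $$P_{T,S}(x)=(T+S-1)x^3+\big(1-T-2S+q(S-1-T)\big)x^2+\big(S+q(T-S)\big)x,$$ $X=(1-q)(T-1)+qS$ and $Y=q(T-1)+(1-q)S$. Then $P_{T,S}$ has exactly three distinct roots in $[0,1]$ if and only if $$X<0\quad\text{and}\quad -\frac{X^2}{4q}-q<Y<-q.$$ *)

(* Defs.v *)
From Stdlib Require Import Reals.
Open Scope R_scope.

Definition P_TS (q T S x : R) : R :=
  (T + S - 1) * x ^ 3
  + (1 - T - 2 * S + q * (S - 1 - T)) * x ^ 2
  + (S + q * (T - S)) * x.

Definition Xq (q T S : R) : R := (1 - q) * (T - 1) + q * S.
Definition Yq (q T S : R) : R := q * (T - 1) + (1 - q) * S.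

Definition exactly_three_roots_01 (f : R -> R) : Prop :=
  exists a b c : R,
    a <> b /\ a <> c /\ b <> c /\
    0 <= a <= 1 /\ 0 <= b <= 1 /\ 0 <= c <= 1 /\
    f a = 0 /\ f b = 0 /\ f c = 0 /\
    (forall x, 0 <= x <= 1 -> f x = 0 -> x = a \/ x = b \/ x = c).

(* Main.v *)
Require Import Defs.
From Stdlib Require Import Reals Lra Psatz.
Open Scope R_scope.

Definition gq (q X c t : R) : R := q * t ^ 2 + X * t - c.

Lemma P_form (q T S x : R) : x <> 1 ->
  P_TS q T S x = - x * (1 - x) ^ 2 * gq q (Xq q T S) (Yq q T S + q) (x / (1 - x)).
Proof. intros H. unfold P_TS, gq, Xq, Yq. field. intro H'. apply H. lra. Qed.

Lemma P_one (q T S : R) : P_TS q T S 1 = - q.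
Proof. unfold P_TS. ring. Qed.

Lemma P_t (q T S t : R) : 0 <= t ->
  P_TS q T S (t / (1 + t)) = - (t / (1 + t)) * (1 / (1 + t)) ^ 2 * gq q (Xq q T S) (Yq q T S + q) t.
Proof. intros H. unfold P_TS, gq, Xq, Yq. field. lra. Qed.

Lemma two_roots (q T S u v : R) : 0 < q -> 0 < u < 1 -> 0 < v < 1 -> u <> v ->
  P_TS q T S u = 0 -> P_TS q T S v = 0 ->
  (Xq q T S < 0 /\
   - (Xq q T S) ^ 2 / (4 * q) - q < Yq q T S /\ Yq q T S < - q).
Proof.
  intros hq hu hv huv Pu Pv.
  rewrite P_form in Pu by lra. rewrite P_form in Pv by lra.
  set (X := Xq q T S) in *. set (Y := Yq q T S) in *.
  set (tu := u / (1 - u)) in *. set (tv := v / (1 - v)) in *.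
  assert (tu0 : 0 < tu) by (unfold tu; apply Rdiv_lt_0_compat; lra).
  assert (tv0 : 0 < tv) by (unfold tv; apply Rdiv_lt_0_compat; lra).
  assert (gu : gq q X (Y + q) tu = 0).
  { destruct (Rmult_integral _ _ Pu) as [H|H]; auto.
    destruct (Rmult_integral _ _ H) as [H1|H1]; [lra|]. exfalso. nra. }
  assert (gv : gq q X (Y + q) tv = 0).
  { destruct (Rmult_integral _ _ Pv) as [H|H]; auto.
    destruct (Rmult_integral _ _ H) as [H1|H1]; [lra|]. exfalso. nra. }
  assert (tne : tu <> tv).
  { intro E. apply huv.
    assert (u = tu / (1 + tu)) by (unfold tu; field; lra).
    assert (v = tv / (1 + tv)) by (unfold tv; field; lra).
    rewrite H, H0, E. reflexivity. }
  unfold gq in gu, gv.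
  assert (HX : X = - q * (tu + tv)).
  { assert ((tu - tv) * (q * (tu + tv) + X) = 0) by nra.
    destruct (Rmult_integral _ _ H) as [H1|H1]; [exfalso; apply tne; lra| lra]. }
  assert (HY : Y + q = - q * tu * tv) by (rewrite HX in gu; nra).
  split.
  { rewrite HX. assert (0 < q * (tu + tv)) by (apply Rmult_lt_0_compat; lra). lra. }
  split; cycle 1.
  { assert (0 < q * tu * tv) by (apply Rmult_lt_0_compat; [apply Rmult_lt_0_compat|]; lra). lra. }
  assert (D : X ^ 2 + 4 * q * (Y + q) = q ^ 2 * (tu - tv) ^ 2) by (rewrite HX, HY; ring).
  assert (Dp : 0 < q ^ 2 * (tu - tv) ^ 2).
  { apply Rmult_lt_0_compat; [nra|]. assert (tu - tv <> 0) by lra. nra. }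
  assert (E : Y - (- X ^ 2 / (4 * q) - q) = (X ^ 2 + 4 * q * (Y + q)) / (4 * q)) by (field; lra).
  assert (0 < (X ^ 2 + 4 * q * (Y + q)) / (4 * q)) by (apply Rdiv_lt_0_compat; lra).
  lra.
Qed.

Theorem mainTheorem6 (q T S : R) (hq : 0 < q < 1 / 2) :
  exactly_three_roots_01 (P_TS q T S) <->
  (Xq q T S < 0 /\
   - (Xq q T S) ^ 2 / (4 * q) - q < Yq q T S /\ Yq q T S < - q).
Proof.
  split.
  - intros (a & b & c & hab & hac & hbc & ha & hb & hc & Pa & Pb & Pc & _).
    assert (n1 : forall x, 0 <= x <= 1 -> P_TS q T S x = 0 -> x <> 1).
    { intros x _ Px E. subst x. rewrite P_one in Px. lra. }
    assert (a1 := n1 a ha Pa). assert (b1 := n1 b hb Pb). assert (c1 := n1 c hc Pc).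
    destruct (Req_dec a 0) as [a0|a0].
    + apply (two_roots q T S b c); try lra. 
    + destruct (Req_dec b 0) as [b0|b0].
      * apply (two_roots q T S a c); try lra.
      * apply (two_roots q T S a b); try lra.
  - intros (HX & HY1 & HY2).
    set (X := Xq q T S) in *. set (Y := Yq q T S) in *.
    set (D := X ^ 2 + 4 * q * (Y + q)).
    assert (Dp : 0 < D).
    { assert (E : Y - (- X ^ 2 / (4 * q) - q) = D / (4 * q)) by (unfold D; field; lra).
      assert (0 < D / (4 * q)) by lra.
      assert (D = (D / (4 * q)) * (4 * q)) by (field; lra).
      rewrite H0. apply Rmult_lt_0_compat; lra. }
    set (s := sqrt D).
    assert (s2 : s * s = D) by (apply sqrt_sqrt; lra).
    assert (s0 : 0 < s) by (apply sqrt_lt_R0; lra).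
    assert (sX : s < - X).
    { assert (D < X ^ 2) by (unfold D; nra). nra. }
    set (t1 := (- X + s) / (2 * q)). set (t2 := (- X - s) / (2 * q)).
    assert (t1p : 0 < t1) by (unfold t1; apply Rdiv_lt_0_compat; lra).
    assert (t2p : 0 < t2) by (unfold t2; apply Rdiv_lt_0_compat; lra).
    assert (t12 : t1 <> t2).
    { unfold t1, t2. intro E. assert ((- X + s) = (- X - s)).
      { apply (Rmult_eq_reg_r (/ (2 * q))). exact E. apply Rinv_neq_0_compat; lra. }
      lra. }
    assert (gfac : forall t, gq q X (Y + q) t = q * (t - t1) * (t - t2)).
    { intro t. unfold gq, t1, t2. field_simplify; [|lra].
      replace (s ^ 2) with D by (rewrite <- s2; ring). unfold D. field. lra. }
    assert (inj : forall t t', 0 <= t -> 0 <= t' -> t / (1 + t) = t' / (1 + t') -> t = t').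
    { intros t t' h h' E.
      assert (t * (1 + t') = t' * (1 + t)).
      { apply (Rmult_eq_reg_r (/ ((1 + t) * (1 + t')))).
        replace (t * (1 + t') * / ((1 + t) * (1 + t'))) with (t / (1 + t)) by (field; lra).
        replace (t' * (1 + t) * / ((1 + t) * (1 + t'))) with (t' / (1 + t')) by (field; lra).
        exact E. apply Rinv_neq_0_compat. nra. }
      nra. }
    assert (rng : forall t, 0 < t -> 0 < t / (1 + t) < 1).
    { intros t ht. split. apply Rdiv_lt_0_compat; lra.
      apply (Rmult_lt_reg_r (1 + t)); [lra|].
      replace (t / (1 + t) * (1 + t)) with t by (field; lra). lra. }
    assert (root : forall t, 0 <= t -> gq q X (Y + q) t = 0 -> P_TS q T S (t / (1 + t)) = 0).
    { intros t ht g. rewrite P_t by lra. unfold X, Y in g. rewrite g. ring. }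
    exists 0, (t1 / (1 + t1)), (t2 / (1 + t2)).
    pose proof (rng t1 t1p). pose proof (rng t2 t2p).
    split; [lra|]. split; [lra|]. split.
    { intro E. apply t12. apply inj; lra. }
    split; [lra|]. split; [lra|]. split; [lra|].
    split. { unfold P_TS. ring. }
    split. { apply root; [lra|]. rewrite gfac. ring. }
    split. { apply root; [lra|]. rewrite gfac. ring. }
    intros x hx Px.
    destruct (Req_dec x 1) as [x1|x1].
    { subst x. rewrite P_one in Px. lra. }
    rewrite P_form in Px by exact x1. fold X Y in Px.
    rewrite gfac in Px.
    set (t := x / (1 - x)) in *.
    assert (xt : x = t / (1 + t)) by (unfold t; field; lra).
    destruct (Rmult_integral _ _ Px) as [K|K].
    + destruct (Rmult_integral _ _ K) as [K1|K1]; [left; lra|].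
      exfalso. assert (K2 : 1 - x <> 0) by lra. exact (pow_nonzero _ 2 K2 K1).
    + destruct (Rmult_integral _ _ K) as [K1|K1].
      * destruct (Rmult_integral _ _ K1) as [K2|K2]; [lra|].
        right; left. replace t with t1 in xt by lra. exact xt.
      * right; right. replace t with t2 in xt by lra. exact xt.
Qed.
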